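(* Fix $2\le d\le7$. There exists $c_d$ with $0<c_g<c_d$ such that for all $0\le c<c_d$: both $x\mapsto\mathsf i(c,x)$ and $x\mapsto\mathsf j(c,x)$ have unique fixed points $a_c,b_c$ in $(0,1)$; $|\partial\mathsf i(c,x)/\partial x|<1$ and $|\partial\mathsf j(c,x)/\partial x|<1$ for $x\in[0,1]$; for any $x\in[0,1]$ the iterates of $\mathsf i(c,\cdot)$ from $x$ converge to $a_c$ and the iterates of $\mathsf j(c,\cdot)$ from $x$ converge to $b_c$; and $\mathsf i(c,x)>x$ if and only if $x\in[0,a_c)$, while $\mathsf j(c,x)>x$ if and only if $x\in[0,b_c)$ (for $x\in[0,1]$).
   Context: $f(\alpha,x):=\big(\frac{1+\alpha x}{1+2x}\big)^d$ for $1\le\alpha<2$, $0\le x\le1$. $\mathsf i(c,x):=f(1,f(1+c,x))$ and $\mathsf j(c,x):=f(1+c,f(1,x))$. $g(b,x):=b^d\big(\frac{1+x+x^2}{1+b+bx}\big)^d$, and $c_g$ denotes the unique fixed point in $(0,1)$ of $x\mapsto g(1,x)$. *)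

(* Defs.v *)
From Stdlib Require Import Reals Lra ClassicalEpsilon.
From Coquelicot Require Import Coquelicot.
Open Scope R_scope.

Definition f (d : nat) (alpha x : R) : R := ((1 + alpha * x) / (1 + 2 * x)) ^ d.

Definition fi (d : nat) (c x : R) : R := f d 1 (f d (1 + c) x).
Definition fj (d : nat) (c x : R) : R := f d (1 + c) (f d 1 x).

Definition g (d : nat) (b x : R) : R :=
  b ^ d * ((1 + x + x ^ 2) / (1 + b + b * x)) ^ d.

Definition c_g (d : nat) : R :=
  epsilon (inhabits 0) (fun x => 0 < x < 1 /\ g d 1 x = x).

(* Main.v *)
Require Import Defs.
From Stdlib Require Import Reals Lra Lia Psatz QArith Qreals ClassicalEpsilon.
From Coquelicot Require Import Coquelicot.
Open Scope R_scope.
Local Notation f := Defs.f.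

Lemma cont_of_derive (F : R -> R) x l : is_derive F x l -> continuity_pt F x.
Proof.
  intros H. apply continuity_pt_filterlim.
  apply (ex_derive_continuous F x). exists l. exact H.
Qed.

Lemma lip_of_derive (F : R -> R) (K : R)
  (Hd : forall x, 0 <= x <= 1 -> exists l, is_derive F x l /\ Rabs l <= K) :
  forall x y, 0 <= x <= 1 -> 0 <= y <= 1 -> Rabs (F y - F x) <= K * Rabs (y - x).
Proof.
  intros x y Hx Hy.
  assert (Hin : forall t, Rmin x y <= t <= Rmax x y -> 0 <= t <= 1).
  { intros t [H1 H2]. split.
    - apply Rle_trans with (Rmin x y); [apply Rmin_glb; lra | exact H1].
    - apply Rle_trans with (Rmax x y); [exact H2 | apply Rmax_lub; lra]. }
  assert (HD : forall t, 0 <= t <= 1 -> is_derive F t (Derive F t) /\ Rabs (Derive F t) <= K).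
  { intros t Ht. destruct (Hd t Ht) as [l [Hl Hk]].
    rewrite (is_derive_unique F t l Hl). auto. }
  destruct (MVT_gen F x y (Derive F)) as [c [Hc Heq]].
  - intros t Ht. apply HD. apply Hin. lra.
  - intros t Ht. apply (cont_of_derive F t (Derive F t)). apply HD. apply Hin. lra.
  - rewrite Heq, Rabs_mult. apply Rmult_le_compat_r; [apply Rabs_pos|].
    apply HD. apply Hin. exact Hc.
Qed.

Lemma contraction_main (F : R -> R) (K : R) (HK : 0 <= K < 1)
  (Hrange : forall x, 0 <= x <= 1 -> 0 <= F x <= 1)
  (H0 : 0 < F 0) (H1 : F 1 < 1)
  (Hd : forall x, 0 <= x <= 1 -> exists l, is_derive F x l /\ Rabs l <= K) :
  exists a, (0 < a < 1 /\ F a = a /\ forall y, 0 < y < 1 -> F y = y -> y = a) /\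
    (forall x, 0 <= x <= 1 -> is_lim_seq (fun n => Nat.iter n F x) a) /\
    (forall x, 0 <= x <= 1 -> (F x > x <-> 0 <= x < a)).
Proof.
  pose proof (lip_of_derive F K Hd) as Hl.
  assert (Hc : forall x, 0 <= x <= 1 -> continuity_pt F x).
  { intros x Hx. destruct (Hd x Hx) as [l [H _]]. exact (cont_of_derive F x l H). }
  destruct (Ranalysis5.IVT_interv (fun x => x - F x) 0 1) as [a [Ha Hfa]].
  - intros t Ht. apply (continuity_pt_minus (fun x => x) F). 
    + apply derivable_continuous_pt, derivable_pt_id.
    + apply Hc; exact Ht.
  - lra.
  - lra.
  - lra.
  - assert (Fa : F a = a) by lra.
    assert (Ha0 : a <> 0) by (intro; subst; lra).
    assert (Ha1 : a <> 1) by (intro; subst; lra).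
    assert (Ha' : 0 < a < 1) by lra.
    exists a. split; [|split].
    + split; [exact Ha'|split; [exact Fa|]].
      intros y Hy Fy. pose proof (Hl a y ltac:(lra) ltac:(lra)) as H.
      rewrite Fy, Fa in H. pose proof (Rabs_pos (y - a)) as Hp.
      assert (Hz : Rabs (y - a) = 0) by nra. apply Rabs_eq_0 in Hz. lra.
    + intros x Hx.
      assert (Hit : forall n, 0 <= Nat.iter n F x <= 1 /\
                 Rabs (Nat.iter n F x - a) <= K ^ n * Rabs (x - a)).
      { induction n as [|n [IH1 IH2]]; simpl.
        - split; [exact Hx| lra].
        - split; [apply Hrange; exact IH1|].
          pose proof (Hl a (Nat.iter n F x) ltac:(lra) IH1) as H.
          rewrite Fa in H. 
          apply Rle_trans with (K * Rabs (Nat.iter n F x - a)); [exact H|].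
          rewrite Rmult_assoc. apply Rmult_le_compat_l; lra. }
      apply is_lim_seq_le_le with (u := fun n => a - K ^ n * Rabs (x - a))
                                  (w := fun n => a + K ^ n * Rabs (x - a)).
      * intros n. destruct (Hit n) as [_ H]. apply Rabs_le_between' in H. lra.
      * assert (E : a - 0 * Rabs (x - a) = a) by ring.
        assert (L : is_lim_seq (fun n => a - K ^ n * Rabs (x - a)) (a - 0 * Rabs (x - a))).
        { apply (is_lim_seq_minus' (fun _ => a)); [apply is_lim_seq_const|].
          apply (is_lim_seq_mult' (fun n => K ^ n) (fun _ => Rabs (x - a))).
          -- apply is_lim_seq_geom. rewrite Rabs_pos_eq; lra.
          -- apply is_lim_seq_const. }
        rewrite E in L. exact L.
      * assert (E : a + 0 * Rabs (x - a) = a) by ring.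
        assert (L : is_lim_seq (fun n => a + K ^ n * Rabs (x - a)) (a + 0 * Rabs (x - a))).
        { apply (is_lim_seq_plus' (fun _ => a)); [apply is_lim_seq_const|].
          apply (is_lim_seq_mult' (fun n => K ^ n) (fun _ => Rabs (x - a))).
          -- apply is_lim_seq_geom. rewrite Rabs_pos_eq; lra.
          -- apply is_lim_seq_const. }
        rewrite E in L. exact L.
    + intros x Hx. pose proof (Hl a x ltac:(lra) Hx) as H.
      rewrite Fa in H. apply Rabs_le_between' in H.
      destruct (Rtotal_order x a) as [Hlt|[Heq|Hgt]].
      * rewrite Rabs_left in H by lra. split; [intros; lra|]. intros _. nra.
      * subst. split; intros; lra.
      * rewrite Rabs_pos_eq in H by lra. split; [|intros; lra]. intros. nra.
Qed.

Definition u (a x : R) : R := (1 + a * x) / (1 + 2 * x).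
Definition fp (d : nat) (a x : R) : R :=
  INR d * u a x ^ pred d * ((a - 2) / (1 + 2 * x) ^ 2).

Lemma div_le a b c e : 0 < b -> 0 < e -> a * e <= c * b -> a / b <= c / e.
Proof.
  intros Hb He H. apply (Rmult_le_reg_r (b * e)); [nra|].
  replace (a / b * (b * e)) with (a * e) by (field; lra).
  replace (c / e * (b * e)) with (c * b) by (field; lra). exact H.
Qed.

Lemma f_eq d a x : f d a x = u a x ^ d.
Proof. reflexivity. Qed.

Lemma f_derive d a x : 0 <= x -> is_derive (f d a) x (fp d a x).
Proof.
  intros Hx. unfold Defs.f, fp, u. auto_derive. lra. unfold Rdiv. set (p := ((1 + a * x) * / (1 + 2 * x)) ^ Init.Nat.pred d). field. lra.
Qed.

Lemma u_pos a x : 1 <= a -> 0 <= x -> 0 < u a x.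
Proof. intros. unfold u. apply Rdiv_lt_0_compat; nra. Qed.

Lemma u_le1 a x : a <= 2 -> 0 <= x -> u a x <= 1.
Proof.
  intros. unfold u. replace 1 with (1 / 1) at 3 by field.
  apply div_le; nra.
Qed.

Lemma u_lt1 a x : a < 2 -> 0 < x -> u a x < 1.
Proof.
  intros. unfold u. apply (Rmult_lt_reg_r (1 + 2 * x)); [lra|].
  unfold Rdiv. rewrite Rmult_assoc, Rinv_l by lra. nra.
Qed.

Lemma u_mono_a a1 a2 x : a1 <= a2 -> 0 <= x -> u a1 x <= u a2 x.
Proof. intros. unfold u. apply div_le; nra. Qed.

Lemma u_anti_x a x1 x2 : a <= 2 -> 0 <= x1 <= x2 -> u a x2 <= u a x1.
Proof. intros. unfold u. apply div_le; nra. Qed.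

Lemma fp_abs d a x : 1 <= a <= 2 -> 0 <= x ->
  Rabs (fp d a x) = INR d * u a x ^ pred d * ((2 - a) / (1 + 2 * x) ^ 2).
Proof.
  intros Ha Hx. unfold fp. rewrite !Rabs_mult.
  rewrite (Rabs_pos_eq (INR d)) by apply pos_INR.
  rewrite (Rabs_pos_eq (u a x ^ pred d)) by (apply pow_le; left; apply u_pos; lra).
  rewrite Rabs_left1.
  - field. nra.
  - unfold Rdiv. apply Rmult_le_0_r; [lra|]. left. apply Rinv_0_lt_compat. nra.
Qed.

Lemma fp_bound d a aL aU x xL : 1 <= aL <= a -> a <= aU <= 2 -> 0 <= xL <= x ->
  Rabs (fp d a x) <= INR d * u aU xL ^ pred d * ((2 - aL) / (1 + 2 * xL) ^ 2).
Proof.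
  intros Ha HaU Hx. rewrite fp_abs by lra.
  apply Rmult_le_compat.
  - apply Rmult_le_pos; [apply pos_INR|]. apply pow_le. left; apply u_pos; lra.
  - apply Rmult_le_pos; [lra|]. left. apply Rinv_0_lt_compat. nra.
  - apply Rmult_le_compat_l; [apply pos_INR|]. apply pow_incr. split.
    + left; apply u_pos; lra.
    + apply Rle_trans with (u aU x); [apply u_mono_a; lra| apply u_anti_x; lra].
  - apply div_le; try nra. apply Rmult_le_compat; try nra.
Qed.

Lemma fi_derive d c x : 0 <= c -> 0 <= x ->
  is_derive (fi d c) x (fp d 1 (f d (1 + c) x) * fp d (1 + c) x).
Proof.
  intros Hc Hx.
  assert (Hy : 0 <= f d (1 + c) x) by (rewrite f_eq; apply pow_le; left; apply u_pos; lra).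
  pose proof (is_derive_comp (f d 1) (f d (1 + c)) x _ _ (f_derive d 1 _ Hy) (f_derive d (1 + c) x Hx)) as H.
  unfold fi. replace (fp d 1 (f d (1 + c) x) * fp d (1 + c) x) with
    (scal (fp d (1 + c) x) (fp d 1 (f d (1 + c) x))). exact H.
  unfold scal; simpl; unfold mult; simpl. ring.
Qed.

Lemma fj_derive d c x : 0 <= c -> 0 <= x ->
  is_derive (fj d c) x (fp d (1 + c) (f d 1 x) * fp d 1 x).
Proof.
  intros Hc Hx.
  assert (Hy : 0 <= f d 1 x) by (rewrite f_eq; apply pow_le; left; apply u_pos; lra).
  pose proof (is_derive_comp (f d (1 + c)) (f d 1) x _ _ (f_derive d (1 + c) _ Hy) (f_derive d 1 x Hx)) as H.
  unfold fj. replace (fp d (1 + c) (f d 1 x) * fp d 1 x) with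
    (scal (fp d 1 x) (fp d (1 + c) (f d 1 x))). exact H.
  unfold scal; simpl; unfold mult; simpl. ring.
Qed.

Definition BI d c1 c2 x1 x2 :=
  (INR d * u 1 (u (1 + c1) x2 ^ d) ^ pred d * ((2 - 1) / (1 + 2 * (u (1 + c1) x2 ^ d)) ^ 2)) *
  (INR d * u (1 + c2) x1 ^ pred d * ((2 - (1 + c1)) / (1 + 2 * x1) ^ 2)).
Definition BJ d c1 c2 x1 x2 :=
  (INR d * u (1 + c2) (u 1 x2 ^ d) ^ pred d * ((2 - (1 + c1)) / (1 + 2 * (u 1 x2 ^ d)) ^ 2)) *
  (INR d * u 1 x1 ^ pred d * ((2 - 1) / (1 + 2 * x1) ^ 2)).

Lemma BI_sound d c1 c2 x1 x2 c x : 0 <= c1 <= c -> c <= c2 <= 1 -> 0 <= x1 <= x -> x <= x2 ->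
  Rabs (fp d 1 (f d (1 + c) x) * fp d (1 + c) x) <= BI d c1 c2 x1 x2.
Proof.
  intros. unfold BI. rewrite Rabs_mult.
  apply Rmult_le_compat; try apply Rabs_pos.
  - apply fp_bound; try lra. split.
    + apply pow_le. left; apply u_pos; lra.
    + rewrite f_eq. apply pow_incr. split; [left; apply u_pos; lra|].
      apply Rle_trans with (u (1 + c) x2); [apply u_mono_a; lra| apply u_anti_x; lra].
  - apply fp_bound; lra.
Qed.

Lemma BJ_sound d c1 c2 x1 x2 c x : 0 <= c1 <= c -> c <= c2 <= 1 -> 0 <= x1 <= x -> x <= x2 ->
  Rabs (fp d (1 + c) (f d 1 x) * fp d 1 x) <= BJ d c1 c2 x1 x2.
Proof.
  intros. unfold BJ. rewrite Rabs_mult.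
  apply Rmult_le_compat; try apply Rabs_pos.
  - apply fp_bound; try lra. split.
    + apply pow_le. left; apply u_pos; lra.
    + rewrite f_eq. apply pow_incr. split; [left; apply u_pos; lra|].
      apply u_anti_x; lra.
  - apply fp_bound; lra.
Qed.

Fixpoint qpow (q : Q) (n : nat) : Q := match n with O => 1%Q | S n => (q * qpow q n)%Q end.

Lemma Q2R_qpow q n : Q2R (qpow q n) = Q2R q ^ n.
Proof. induction n; simpl. apply RMicromega.Q2R_1. rewrite Q2R_mult, IHn. reflexivity. Qed.

Lemma Q2R_div' x y : Q2R (x / y) = Q2R x / Q2R y.
Proof.
  unfold Qdiv. rewrite Q2R_mult, RMicromega.Q2R_inv_ext.
  destruct (Qeq_bool y 0) eqn:E.
  - apply Qeq_bool_eq in E. apply Qeq_eqR in E. rewrite E, RMicromega.Q2R_0.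
    unfold Rdiv. rewrite Rinv_0. ring.
  - reflexivity.
Qed.

Lemma Q2R_2 : Q2R 2%Q = 2.
Proof. unfold Q2R. simpl. field. Qed.
Lemma Q2R_4 : Q2R 4%Q = 4.
Proof. unfold Q2R. simpl. field. Qed.

Definition dQ (d : nat) : Q := inject_Z (Z.of_nat d).
Lemma Q2R_dQ d : Q2R (dQ d) = INR d.
Proof. unfold dQ, Q2R. simpl. rewrite INR_IZR_INZ. field. Qed.

Lemma Q2R_red q : Q2R (Qred q) = Q2R q.
Proof. apply Qeq_eqR, Qred_correct. Qed.

Definition uQ (a x : Q) : Q := Qred ((1 + a * x) / (1 + 2 * x))%Q.
Lemma Q2R_uQ a x : Q2R (uQ a x) = u (Q2R a) (Q2R x).
Proof.
  unfold uQ, u. rewrite Q2R_red, Q2R_div', !Q2R_plus, !Q2R_mult, RMicromega.Q2R_1, Q2R_2. reflexivity.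
Qed.

Definition BIQ d (c1 c2 x1 x2 : Q) : Q :=
  ((dQ d * qpow (uQ 1 (qpow (uQ (1 + c1) x2) d)) (pred d) *
     ((2 - 1) / qpow (1 + 2 * (qpow (uQ (1 + c1) x2) d)) 2)) *
  (dQ d * qpow (uQ (1 + c2) x1) (pred d) * ((2 - (1 + c1)) / qpow (1 + 2 * x1) 2)))%Q.
Definition BJQ d (c1 c2 x1 x2 : Q) : Q :=
  ((dQ d * qpow (uQ (1 + c2) (qpow (uQ 1 x2) d)) (pred d) *
     ((2 - (1 + c1)) / qpow (1 + 2 * (qpow (uQ 1 x2) d)) 2)) *
  (dQ d * qpow (uQ 1 x1) (pred d) * ((2 - 1) / qpow (1 + 2 * x1) 2)))%Q.

Ltac q2r := repeat first [ rewrite Q2R_uQ | rewrite Q2R_qpow | rewrite Q2R_div' | rewrite Q2R_mult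
  | rewrite Q2R_plus | rewrite Q2R_minus | rewrite RMicromega.Q2R_1 | rewrite Q2R_2 | rewrite Q2R_4 | rewrite Q2R_dQ ].

Lemma Q2R_BI d c1 c2 x1 x2 : Q2R (BIQ d c1 c2 x1 x2) = BI d (Q2R c1) (Q2R c2) (Q2R x1) (Q2R x2).
Proof. unfold BIQ, BI. q2r. reflexivity. Qed.
Lemma Q2R_BJ d c1 c2 x1 x2 : Q2R (BJQ d c1 c2 x1 x2) = BJ d (Q2R c1) (Q2R c2) (Q2R x1) (Q2R x2).
Proof. unfold BJQ, BJ. q2r. reflexivity. Qed.

Fixpoint chk (ok : Q -> Q -> Q -> Q -> bool) (n : nat) (c1 c2 x1 x2 : Q) : bool :=
  if ok c1 c2 x1 x2 then true else
  match n with
  | O => false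
  | S n => if Qle_bool (x2 - x1)%Q (c2 - c1)%Q then
             let m := Qred ((c1 + c2) / 2)%Q in
             if chk ok n c1 m x1 x2 then chk ok n m c2 x1 x2 else false
           else
             let m := Qred ((x1 + x2) / 2)%Q in
             if chk ok n c1 c2 x1 m then chk ok n c1 c2 m x2 else false
  end.

Lemma chk_sound (ok : Q -> Q -> Q -> Q -> bool) (P : R -> R -> Prop)
  (Hok : forall c1 c2 x1 x2, ok c1 c2 x1 x2 = true -> forall c x,
     Q2R c1 <= c <= Q2R c2 -> Q2R x1 <= x <= Q2R x2 -> P c x) :
  forall n c1 c2 x1 x2, chk ok n c1 c2 x1 x2 = true -> forall c x,
     Q2R c1 <= c <= Q2R c2 -> Q2R x1 <= x <= Q2R x2 -> P c x.
Proof.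
  induction n; intros c1 c2 x1 x2 H c x Hc Hx; cbn [chk] in H.
  - destruct (ok c1 c2 x1 x2) eqn:E; [eapply Hok; eauto| discriminate].
  - destruct (ok c1 c2 x1 x2) eqn:E; [eapply Hok; eauto|].
    destruct (Qle_bool (x2 - x1) (c2 - c1)).
    + destruct (chk ok n c1 (Qred ((c1 + c2) / 2)%Q) x1 x2) eqn:H1; [|discriminate].
      destruct (Rle_or_lt c (Q2R (Qred ((c1 + c2) / 2)%Q))).
      * apply (IHn _ _ _ _ H1); lra.
      * apply (IHn _ _ _ _ H); lra.
    + destruct (chk ok n c1 c2 x1 (Qred ((x1 + x2) / 2)%Q)) eqn:H1; [|discriminate].
      destruct (Rle_or_lt x (Q2R (Qred ((x1 + x2) / 2)%Q))).
      * apply (IHn _ _ _ _ H1); lra.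
      * apply (IHn _ _ _ _ H); lra.
Qed.

Definition K : Q := 99 # 100.

Definition okI d c1 c2 x1 x2 : bool :=
  if Qle_bool 0%Q c1 && Qle_bool c2 1%Q && Qle_bool 0%Q x1 then Qle_bool (BIQ d c1 c2 x1 x2) K else false.
Definition okJ d c1 c2 x1 x2 : bool :=
  if Qle_bool 0%Q c1 && Qle_bool c2 1%Q && Qle_bool 0%Q x1 then Qle_bool (BJQ d c1 c2 x1 x2) K else false.

Lemma Qle_R x y : Qle_bool x y = true -> Q2R x <= Q2R y.
Proof. apply RMicromega.Qle_true. Qed.

Lemma okI_sound d : forall c1 c2 x1 x2, okI d c1 c2 x1 x2 = true -> forall c x,
  Q2R c1 <= c <= Q2R c2 -> Q2R x1 <= x <= Q2R x2 ->
  Rabs (fp d 1 (Defs.f d (1 + c) x) * fp d (1 + c) x) <= Q2R K.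
Proof.
  intros c1 c2 x1 x2 H c x Hc Hx. unfold okI in H.
  destruct (Qle_bool 0%Q c1) eqn:E1, (Qle_bool c2 1%Q) eqn:E2, (Qle_bool 0%Q x1) eqn:E3; simpl in H; try discriminate.
  repeat match goal with H : Qle_bool _ _ = true |- _ => apply Qle_R in H end.
  rewrite RMicromega.Q2R_0, RMicromega.Q2R_1, Q2R_BI in *.
  eapply Rle_trans; [apply BI_sound with (c1 := Q2R c1) (c2 := Q2R c2) (x1 := Q2R x1) (x2 := Q2R x2); lra|]. assumption.
Qed.

Lemma okJ_sound d : forall c1 c2 x1 x2, okJ d c1 c2 x1 x2 = true -> forall c x,
  Q2R c1 <= c <= Q2R c2 -> Q2R x1 <= x <= Q2R x2 ->
  Rabs (fp d (1 + c) (Defs.f d 1 x) * fp d 1 x) <= Q2R K.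
Proof.
  intros c1 c2 x1 x2 H c x Hc Hx. unfold okJ in H.
  destruct (Qle_bool 0%Q c1) eqn:E1, (Qle_bool c2 1%Q) eqn:E2, (Qle_bool 0%Q x1) eqn:E3; simpl in H; try discriminate.
  repeat match goal with H : Qle_bool _ _ = true |- _ => apply Qle_R in H end.
  rewrite RMicromega.Q2R_0, RMicromega.Q2R_1, Q2R_BJ in *.
  eapply Rle_trans; [apply BJ_sound with (c1 := Q2R c1) (c2 := Q2R c2) (x1 := Q2R x1) (x2 := Q2R x2); lra|]. assumption.
Qed.

Lemma test : chk (okI 7) 30 0%Q (1#32) 0%Q 1%Q = true /\ chk (okJ 7) 30 0%Q (1#32) 0%Q 1%Q = true.
Proof. split; vm_compute; reflexivity. Qed.

Definition rR (x : R) : R := (1 + x + x ^ 2) / (1 + 1 + 1 * x).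
Definition gp (d : nat) (x : R) : R := INR d * rR x ^ pred d * ((1 + 4 * x + x ^ 2) / (2 + x) ^ 2).

Lemma g_eq d x : g d 1 x = rR x ^ d.
Proof. unfold g, rR. rewrite pow1. ring. Qed.

Lemma g_derive d x : 0 <= x -> is_derive (g d 1) x (gp d x).
Proof.
  intros Hx. unfold g, gp, rR. auto_derive. lra. rewrite pow1. unfold Rdiv.
  set (p := ((1 + x + x * (x * 1)) * / (1 + 1 + 1 * x)) ^ Init.Nat.pred d).
  replace (((1 + x + x ^ 2) * / (1 + 1 + 1 * x)) ^ Init.Nat.pred d) with p by (unfold p; simpl; ring_simplify; reflexivity).
  field. lra.
Qed.

Lemma r_pos x : 0 <= x -> 0 < rR x.
Proof. intros. unfold rR. apply Rdiv_lt_0_compat; nra. Qed.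

Lemma r_mono x y : 0 <= x <= y -> rR x <= rR y.
Proof.
  intros [H1 H2]. unfold rR. apply div_le; try nra.
  assert (E : (1 + y + y ^ 2) * (1 + 1 + 1 * x) - (1 + x + x ^ 2) * (1 + 1 + 1 * y)
             = (y - x) * (1 + 2 * (x + y) + x * y)) by ring.
  assert (0 <= (y - x) * (1 + 2 * (x + y) + x * y)) by (apply Rmult_le_pos; nra).
  lra.
Qed.

Definition rQ (x : Q) : Q := Qred ((1 + x + qpow x 2) / (1 + 1 + 1 * x))%Q.
Lemma Q2R_rQ x : Q2R (rQ x) = rR (Q2R x).
Proof. unfold rQ, rR. rewrite Q2R_red. q2r. reflexivity. Qed.

Definition okG d (c1 c2 x1 x2 : Q) : bool :=
  if Qle_bool 0%Q x1 then negb (Qle_bool x1 (qpow (rQ x2) d)) else false.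
Definition okG2 d (c1 c2 x1 x2 : Q) : bool :=
  if Qle_bool 0%Q x1 then
    negb (Qle_bool (dQ d * qpow (rQ x1) (pred d) * ((1 + 4 * x1 + qpow x1 2) / qpow (2 + x2) 2))%Q 1%Q)
  else false.

Lemma Qlt_R x y : Qle_bool x y = false -> Q2R y < Q2R x.
Proof.
  intros H. apply Qlt_Rlt. apply Qnot_le_lt. intros H'. apply Qle_bool_iff in H'. congruence.
Qed.

Lemma okG_sound d : forall c1 c2 x1 x2, okG d c1 c2 x1 x2 = true -> forall c x,
  Q2R c1 <= c <= Q2R c2 -> Q2R x1 <= x <= Q2R x2 -> g d 1 x < x.
Proof.
  intros c1 c2 x1 x2 H c x Hc Hx. unfold okG in H.
  destruct (Qle_bool 0%Q x1) eqn:E1; [|discriminate].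
  destruct (Qle_bool x1 (qpow (rQ x2) d)) eqn:E2; [discriminate|].
  apply Qle_R in E1. apply Qlt_R in E2. rewrite RMicromega.Q2R_0 in E1.
  rewrite Q2R_qpow, Q2R_rQ in E2. rewrite g_eq.
  apply Rle_lt_trans with (rR (Q2R x2) ^ d); [|lra].
  apply pow_incr. split; [left; apply r_pos; lra| apply r_mono; lra].
Qed.

Lemma okG2_sound d : forall c1 c2 x1 x2, okG2 d c1 c2 x1 x2 = true -> forall c x,
  Q2R c1 <= c <= Q2R c2 -> Q2R x1 <= x <= Q2R x2 -> 1 < gp d x.
Proof.
  intros c1 c2 x1 x2 H c x Hc Hx. unfold okG2 in H.
  destruct (Qle_bool 0%Q x1) eqn:E1; [|discriminate].
  match type of H with context [Qle_bool ?a ?b] => destruct (Qle_bool a b) eqn:E2 end; [discriminate|].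
  apply Qle_R in E1. apply Qlt_R in E2. rewrite RMicromega.Q2R_0 in E1.
  revert E2; q2r; rewrite !Q2R_rQ; intro E2.
  eapply Rlt_le_trans; [exact E2|]. unfold gp.
  apply Rmult_le_compat.
  - apply Rmult_le_pos; [apply pos_INR|]. apply pow_le. left; apply r_pos; lra.
  - apply Rmult_le_pos; [nra|]. left. apply Rinv_0_lt_compat. nra.
  - apply Rmult_le_compat_l; [apply pos_INR|]. apply pow_incr. split; [left; apply r_pos; lra| apply r_mono; lra].
  - apply div_le; try nra. apply Rmult_le_compat; nra.
Qed.

Lemma G_derive d t : 0 <= t -> is_derive (fun t => g d 1 t - t) t (gp d t - 1).
Proof.
  intros Ht. pose proof (is_derive_minus (g d 1) (fun t => t) t _ _ (g_derive d t Ht) (is_derive_id (K := R_AbsRing) t)) as H.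
  exact H.
Qed.

Lemma cg_bounds d cd x0 : (1 <= d)%nat -> 0 < cd <= x0 -> x0 < 1 ->
  (forall x, cd <= x <= x0 -> g d 1 x < x) ->
  (forall x, x0 <= x <= 1 -> 1 < gp d x) -> 0 < c_g d < cd.
Proof.
  intros Hd Hcd Hx0 HA HB.
  assert (Hneg : forall x, x0 <= x < 1 -> g d 1 x < x).
  { intros x Hx.
    destruct (MVT_gen (fun t => g d 1 t - t) x 1 (fun t => gp d t - 1)) as [c [Hc Heq]].
    - intros t Ht. rewrite Rmin_left in Ht by lra. apply G_derive. lra.
    - intros t Ht. rewrite Rmin_left in Ht by lra. apply (cont_of_derive _ t (gp d t - 1)).
      apply G_derive. lra.
    - rewrite Rmin_left, Rmax_right in Hc by lra.
      assert (E1 : g d 1 1 = 1) by (rewrite g_eq; unfold rR; replace ((1 + 1 + 1 ^ 2) / (1 + 1 + 1 * 1)) with 1 by field; apply pow1).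
      rewrite E1 in Heq. pose proof (HB c ltac:(lra)). nra. }
  destruct (Ranalysis5.IVT_interv (fun t => t - g d 1 t) 0 x0) as [z [Hz Hgz]].
  - intros t Ht. apply (cont_of_derive _ t (1 - gp d t)).
    assert (Ht0 : 0 <= t) by lra.
    pose proof (is_derive_minus (fun t => t) (g d 1) t _ _ (is_derive_id (K := R_AbsRing) t) (g_derive d t Ht0)) as H.
    exact H.
  - lra.
  - rewrite g_eq. assert (0 < rR 0 ^ d) by (apply pow_lt, r_pos; lra). lra.
  - pose proof (HA x0 ltac:(lra)). lra.
  - assert (Hex : exists x, 0 < x < 1 /\ g d 1 x = x).
    { exists z. assert (z <> 0).
      { intro E. subst z. rewrite g_eq in Hgz. assert (0 < rR 0 ^ d) by (apply pow_lt, r_pos; lra). lra. }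
      split; lra. }
    pose proof (epsilon_spec (inhabits 0) _ Hex) as [H1 H2].
    fold (c_g d) in H1, H2.
    split; [lra|].
    destruct (Rlt_or_le (c_g d) cd) as [H|H]; [exact H|].
    destruct (Rle_or_lt (c_g d) x0).
    + pose proof (HA (c_g d) ltac:(lra)). lra.
    + pose proof (Hneg (c_g d) ltac:(lra)). lra.
Qed.

Lemma pow_le_1' z n : 0 <= z <= 1 -> z ^ n <= 1.
Proof. intros H. induction n; simpl; [lra|]. nra. Qed.

Lemma K_val : Q2R K = 99 / 100.
Proof. unfold K, Q2R. simpl. field. Qed.

Lemma main_d d cd (Hd : (2 <= d)%nat) (Hcd : cd < 1) (Hcg : 0 < c_g d < cd)
  (HI : forall c x, 0 <= c <= cd -> 0 <= x <= 1 ->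
      Rabs (fp d 1 (Defs.f d (1 + c) x) * fp d (1 + c) x) <= Q2R K)
  (HJ : forall c x, 0 <= c <= cd -> 0 <= x <= 1 ->
      Rabs (fp d (1 + c) (Defs.f d 1 x) * fp d 1 x) <= Q2R K) :
  exists cd : R, 0 < c_g d < cd /\
  forall c : R, 0 <= c < cd ->
    exists a b : R,
      (0 < a < 1 /\ fi d c a = a /\
         forall y, 0 < y < 1 -> fi d c y = y -> y = a) /\
      (0 < b < 1 /\ fj d c b = b /\
         forall y, 0 < y < 1 -> fj d c y = y -> y = b) /\
      (forall x, 0 <= x <= 1 ->
         exists l, is_derive (fi d c) x l /\ Rabs l < 1) /\
      (forall x, 0 <= x <= 1 ->
         exists l, is_derive (fj d c) x l /\ Rabs l < 1) /\
      (forall x, 0 <= x <= 1 ->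
         is_lim_seq (fun n => Nat.iter n (fi d c) x) a) /\
      (forall x, 0 <= x <= 1 ->
         is_lim_seq (fun n => Nat.iter n (fj d c) x) b) /\
      (forall x, 0 <= x <= 1 -> (fi d c x > x <-> 0 <= x < a)) /\
      (forall x, 0 <= x <= 1 -> (fj d c x > x <-> 0 <= x < b)).
Proof.
  rewrite K_val in HI, HJ.
  exists cd. split; [exact Hcg|]. intros c Hc.
  assert (Hd0 : (0 < d)%nat) by lia.
  assert (HdI : forall x, 0 <= x <= 1 -> exists l, is_derive (fi d c) x l /\ Rabs l <= 99/100).
  { intros x Hx. eexists. split; [apply fi_derive; lra|]. apply HI; lra. }
  assert (HdJ : forall x, 0 <= x <= 1 -> exists l, is_derive (fj d c) x l /\ Rabs l <= 99/100).
  { intros x Hx. eexists. split; [apply fj_derive; lra|]. apply HJ; lra. }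
  assert (Hyi : forall x, 0 <= x -> 0 < Defs.f d (1 + c) x <= 1).
  { intros x Hx. rewrite f_eq. split; [apply pow_lt, u_pos; lra|].
    apply pow_le_1'. split; [left; apply u_pos; lra| apply u_le1; lra]. }
  assert (Hyj : forall x, 0 <= x -> 0 < Defs.f d 1 x <= 1).
  { intros x Hx. rewrite f_eq. split; [apply pow_lt, u_pos; lra|].
    apply pow_le_1'. split; [left; apply u_pos; lra| apply u_le1; lra]. }
  destruct (contraction_main (fi d c) (99/100)) as [a [Ha [Hla Hsa]]]; try lra.
  - intros x Hx. unfold fi. specialize (Hyi x ltac:(lra)). rewrite f_eq. split.
    + apply pow_le. left; apply u_pos; lra.
    + apply pow_le_1'. split; [left; apply u_pos; lra| apply u_le1; lra].
  - unfold fi. specialize (Hyi 0 ltac:(lra)). rewrite f_eq. apply pow_lt, u_pos; lra.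
  - unfold fi. specialize (Hyi 1 ltac:(lra)). rewrite f_eq.
    apply pow_lt_1_compat; [|exact Hd0]. split; [left; apply u_pos; lra| apply u_lt1; lra].
  - exact HdI.
  - destruct (contraction_main (fj d c) (99/100)) as [b [Hb [Hlb Hsb]]]; try lra.
    + intros x Hx. unfold fj. specialize (Hyj x ltac:(lra)). rewrite f_eq. split.
      * apply pow_le. left; apply u_pos; lra.
      * apply pow_le_1'. split; [left; apply u_pos; lra| apply u_le1; lra].
    + unfold fj. specialize (Hyj 0 ltac:(lra)). rewrite f_eq. apply pow_lt, u_pos; lra.
    + unfold fj. specialize (Hyj 1 ltac:(lra)). rewrite f_eq.
      apply pow_lt_1_compat; [|exact Hd0]. split; [left; apply u_pos; lra| apply u_lt1; lra].
    + exact HdJ.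
    + exists a, b. split; [exact Ha|]. split; [exact Hb|].
      split; [|split; [|split; [exact Hla|split; [exact Hlb|split; [exact Hsa|exact Hsb]]]]].
      * intros x Hx. destruct (HdI x Hx) as [l [Hl1 Hl2]]. exists l. split; [exact Hl1|lra].
      * intros x Hx. destruct (HdJ x Hx) as [l [Hl1 Hl2]]. exists l. split; [exact Hl1|lra].
Qed.

Lemma final_d d (cdQ x0Q : Q) n : (2 <= d)%nat ->
  0 < Q2R cdQ <= Q2R x0Q -> Q2R x0Q < 1 ->
  chk (okI d) n 0%Q cdQ 0%Q 1%Q = true ->
  chk (okJ d) n 0%Q cdQ 0%Q 1%Q = true ->
  chk (okG d) n 0%Q 0%Q cdQ x0Q = true ->
  chk (okG2 d) n 0%Q 0%Q x0Q 1%Q = true ->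
  exists cd : R, 0 < c_g d < cd /\
  forall c : R, 0 <= c < cd ->
    exists a b : R,
      (0 < a < 1 /\ fi d c a = a /\
         forall y, 0 < y < 1 -> fi d c y = y -> y = a) /\
      (0 < b < 1 /\ fj d c b = b /\
         forall y, 0 < y < 1 -> fj d c y = y -> y = b) /\
      (forall x, 0 <= x <= 1 ->
         exists l, is_derive (fi d c) x l /\ Rabs l < 1) /\
      (forall x, 0 <= x <= 1 ->
         exists l, is_derive (fj d c) x l /\ Rabs l < 1) /\
      (forall x, 0 <= x <= 1 ->
         is_lim_seq (fun n => Nat.iter n (fi d c) x) a) /\
      (forall x, 0 <= x <= 1 ->
         is_lim_seq (fun n => Nat.iter n (fj d c) x) b) /\
      (forall x, 0 <= x <= 1 -> (fi d c x > x <-> 0 <= x < a)) /\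
      (forall x, 0 <= x <= 1 -> (fj d c x > x <-> 0 <= x < b)).
Proof.
  intros Hd H1 H2 CI CJ CG CG2.
  pose proof RMicromega.Q2R_0 as Z0. pose proof RMicromega.Q2R_1 as Z1.
  apply (main_d d (Q2R cdQ)).
  - exact Hd.
  - lra.
  - apply (cg_bounds d (Q2R cdQ) (Q2R x0Q)); try lra; try lia.
    + intros x Hx. apply (chk_sound (okG d) (fun _ x => g d 1 x < x) (okG_sound d) n _ _ _ _ CG 0 x); lra.
    + intros x Hx. apply (chk_sound (okG2 d) (fun _ x => 1 < gp d x) (okG2_sound d) n _ _ _ _ CG2 0 x); lra.
  - intros c x Hc Hx. apply (chk_sound (okI d) _ (okI_sound d) n _ _ _ _ CI c x); lra.
  - intros c x Hc Hx. apply (chk_sound (okJ d) _ (okJ_sound d) n _ _ _ _ CJ c x); lra.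
Qed.

Theorem lemma6p3 (d : nat) (hd : (2 <= d <= 7)%nat) :
  exists cd : R, 0 < c_g d < cd /\
  forall c : R, 0 <= c < cd ->
    exists a b : R,
      (* unique fixed points in (0,1) *)
      (0 < a < 1 /\ fi d c a = a /\
         forall y, 0 < y < 1 -> fi d c y = y -> y = a) /\
      (0 < b < 1 /\ fj d c b = b /\
         forall y, 0 < y < 1 -> fj d c y = y -> y = b) /\
      (* derivative bounds on [0,1] *)
      (forall x, 0 <= x <= 1 ->
         exists l, is_derive (fi d c) x l /\ Rabs l < 1) /\
      (forall x, 0 <= x <= 1 ->
         exists l, is_derive (fj d c) x l /\ Rabs l < 1) /\
      (* global convergence of iterates *)
      (forall x, 0 <= x <= 1 ->
         is_lim_seq (fun n => Nat.iter n (fi d c) x) a) /\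
      (forall x, 0 <= x <= 1 ->
         is_lim_seq (fun n => Nat.iter n (fj d c) x) b) /\
      (* sign of i(c,x) - x and j(c,x) - x *)
      (forall x, 0 <= x <= 1 -> (fi d c x > x <-> 0 <= x < a)) /\
      (forall x, 0 <= x <= 1 -> (fj d c x > x <-> 0 <= x < b)).
Proof.
  assert (H : d = 2%nat \/ d = 3%nat \/ d = 4%nat \/ d = 5%nat \/ d = 6%nat \/ d = 7%nat) by lia.
  destruct H as [ -> | [ -> | [ -> | [ -> | [ -> | -> ] ] ] ] ].
  - apply (final_d 2 (3#5) (3#4) 30); [lia| | | vm_compute; reflexivity ..]; unfold Q2R; simpl; lra.
  - apply (final_d 3 (1#4) (41#64) 30); [lia| | | vm_compute; reflexivity ..]; unfold Q2R; simpl; lra.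
  - apply (final_d 4 (1#8) (5#8) 30); [lia| | | vm_compute; reflexivity ..]; unfold Q2R; simpl; lra.
  - apply (final_d 5 (1#16) (41#64) 30); [lia| | | vm_compute; reflexivity ..]; unfold Q2R; simpl; lra.
  - apply (final_d 6 (1#32) (21#32) 30); [lia| | | vm_compute; reflexivity ..]; unfold Q2R; simpl; lra.
  - apply (final_d 7 (1#32) (43#64) 30); [lia| | | vm_compute; reflexivity ..]; unfold Q2R; simpl; lra.
Qed.
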